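(* Let $k,d,h$ be positive integers and let $C_h$ be a chain of size $h$. If $\mathcal{F}\subset[k]^d$ does not contain a strong copy of $C_h$, then $|\mathcal{F}|\le d(h-1)k^{d-1}$.
   Context: $[k]^d=\{1,\dots,k\}^d$ with the coordinatewise order $\preceq$. For a poset $Q$, a set $Q'\subset[k]^n$ is a strong copy of $Q$ if it is an induced copy of $Q$ (there is a bijection $\pi:Q\to Q'$ with $x\le_Q y\iff \pi(x)\preceq\pi(y)$) and moreover whenever $\mathbf x,\mathbf y\in Q'$ with $\mathbf x\prec\mathbf y$, we have $\mathbf x(i)<\mathbf y(i)$ for every coordinate $i\in[n]$ (incomparable pairs may share coordinates). *)

(* Defs.v *)
From mathcomp Require Import all_boot.
Set Implicit Arguments. Unset Strict Implicit. Unset Printing Implicit Defensive.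

(* Points of [k]^d, with [k] represented by 'I_k = {0,...,k-1}
   (order-isomorphic to {1,...,k}). *)
Definition grid (d k : nat) := {ffun 'I_d -> 'I_k}.

Definition gle d k (x y : grid d k) : bool := [forall i, x i <= y i].
Definition glt d k (x y : grid d k) : bool := gle x y && (x != y).

(* Q' ⊆ F is a strong copy of the finite poset (P, leP):
   pi : P -> Q' bijection (injective map into F with image Q'),
   induced (order embedding), and comparable pairs strictly ordered
   in every coordinate. *)
Definition has_strong_copy (P : finType) (leP : rel P) d k (F : {set grid d k}) : Prop :=
  exists pi : P -> grid d k,
    [/\ injective pi,
        (forall p, pi p \in F),
        (forall p q, leP p q <-> gle (pi p) (pi q)) &
        (forall p q, glt (pi p) (pi q) -> forall i, pi p i < pi q i)].

Definition chain_le (h : nat) : rel 'I_h := fun a b => (a <= b)%N.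

(* Main.v *)
Require Import Defs.
From mathcomp Require Import all_boot zify.
Set Implicit Arguments. Unset Strict Implicit.

Definition amin d' k (x : {ffun 'I_d'.+1 -> 'I_k}) : 'I_d'.+1 := [arg min_(i < ord0) x i].

Lemma amin_le d' k (x : {ffun 'I_d'.+1 -> 'I_k}) (j : 'I_d'.+1) : x (amin x) <= x j.
Proof. rewrite /amin; case: arg_minnP => // i _ H; exact: H. Qed.

Definition key d' k' (x : {ffun 'I_d'.+1 -> 'I_k'.+1}) : 'I_d'.+1 * {ffun 'I_d' -> 'I_k'.+1} :=
  (amin x, [ffun j => inord (x (lift (amin x) j) - x (amin x))]).

Lemma key_diff d' k' (x y : {ffun 'I_d'.+1 -> 'I_k'.+1}) : key x = key y ->
  amin x = amin y /\ forall j, x j - x (amin x) = y j - y (amin x).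
Proof.
case=> Ha Hf; split => // j.
case: (unliftP (amin x) j) => [j0 ->|->]; last by rewrite !subnn.
have := congr1 (fun f : {ffun 'I_d' -> 'I_k'.+1} => val (f j0)) Hf; rewrite /= !ffunE -Ha.
rewrite !inordK //.
- have := ltn_ord (y (lift (amin x) j0)); lia.
- have := ltn_ord (x (lift (amin x) j0)); lia.
Qed.

Lemma key_lt d' k' (x y : {ffun 'I_d'.+1 -> 'I_k'.+1}) : key x = key y ->
  x (amin x) <= y (amin x) -> x != y -> forall j, x j < y j.
Proof.
move=> /key_diff [Ha Hd] Hle Hne.
have Hx := amin_le x; have Hy := amin_le y; rewrite -Ha in Hy.
have Hlt : x (amin x) < y (amin x).
  rewrite ltn_neqAle Hle andbT; apply/negP => /eqP E; move/negP: Hne; apply.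
  apply/eqP/ffunP => j; apply: val_inj => /=.
  have := Hd j; have := Hx j; have := Hy j; lia.
move=> j; have := Hd j; have := Hx j; have := Hy j; lia.
Qed.
Lemma fiber_small d' k' h (F : {set grid d'.+1 k'.+1}) s :
  0 < h -> ~ has_strong_copy (@chain_le h) F ->
  #|[set x in F | key x == s]| < h.
Proof.
move=> hh Hno; rewrite ltnNge; apply/negP => Hc; apply: Hno.
set A := [set x in F | key x == s].
pose r := fun x y : {ffun 'I_d'.+1 -> 'I_k'.+1} => x s.1 <= y s.1.
have rt : total r by move=> x y; exact: leq_total.
have rtr : transitive r by move=> x y z; exact: leq_trans.
pose l := sort r (enum A).
have sz : size l = #|A| by rewrite size_sort cardE.
have ul : uniq l by rewrite sort_uniq enum_uniq.
have sl : sorted r l := sort_sorted rt _.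
have inl x : x \in l -> x \in A by rewrite mem_sort mem_enum.
pose x0 : {ffun 'I_d'.+1 -> 'I_k'.+1} := [ffun => ord0].
pose pi (p : 'I_h) : grid d'.+1 k'.+1 := nth x0 l p.
have piA p : pi p \in A by apply: inl; apply: mem_nth; rewrite sz; exact: leq_trans (ltn_ord p) Hc.
have piK p : key (pi p) = s by move: (piA p); rewrite inE => /andP [_ /eqP].
have strict (p q : 'I_h) : p < q -> forall j, pi p j < pi q j.
  move=> pq; apply: key_lt; first by rewrite !piK.
  - have -> : amin (pi p) = s.1 by rewrite -(piK p).
    apply: (sorted_ltn_nth rtr x0 sl) => //; rewrite inE sz;
    exact: leq_trans (ltn_ord _) Hc.
  - rewrite /pi nth_uniq ?sz ?(leq_trans (ltn_ord _) Hc) //.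
    by rewrite neq_ltn pq.
have glen (p q : 'I_h) : q < p -> ~~ gle (pi p) (pi q).
  move=> qp; apply/negP => /forallP /(_ ord0); rewrite leqNgt.
  by rewrite (strict _ _ qp ord0).
exists pi; split.
- move=> p q E; apply: val_inj; apply/eqP.
  by rewrite -(nth_uniq x0 _ _ ul) ?sz ?(leq_trans (ltn_ord _) Hc) //; apply/eqP.
- by move=> p; move: (piA p); rewrite inE => /andP [].
- move=> p q; rewrite /chain_le; split.
  + rewrite leq_eqVlt => /orP [/eqP E|pq].
      have -> : p = q by exact: val_inj.
      by apply/forallP.
    by apply/forallP => j; apply: ltnW; exact: strict.
  + by move=> H; rewrite leqNgt; apply/negP => qp; move: (glen _ _ qp); rewrite H.
- move=> p q /andP [H Hne] j.
  case: (ltngtP p q) => [pq|qp|E]; first exact: strict.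
  + by move: (glen _ _ qp); rewrite H.
  + move: Hne; have -> : p = q by exact: val_inj.
    by rewrite eqxx.
Qed.

Theorem lemma3p3 (k d h : nat) (hk : 0 < k) (hd : 0 < d) (hh : 0 < h)
    (F : {set grid d k}) :
  ~ has_strong_copy (@chain_le h) F ->
  #|F| <= d * (h - 1) * k ^ (d - 1).
Proof.
case: d hd F => // d' _; case: k hk => // k' _ F Hno.
rewrite subn1 /= -sum1_card.
rewrite (partition_big (fun x : grid d'.+1 k'.+1 => key x) predT) //=.
apply: (@leq_trans (\sum_(j : 'I_d'.+1 * {ffun 'I_d' -> 'I_k'.+1}) (h - 1))).
  apply: leq_sum => s _.
  rewrite sum1_card.
  have := fiber_small s hh Hno.
  rewrite cardsE.
  by move=> H; rewrite subn1 -ltnS prednK.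
rewrite sum_nat_const card_prod card_ffun !card_ord.
by rewrite subn1 subSS subn0 mulnAC.
Qed.
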